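(* Let $(X,d)$ be a metric space which is not a singleton, let $p\in[1,\infty)$ and let $(a_n)_{n\in\mathbb{N}^*}$ be a sequence of positive reals with $\sum_{n=0}^\infty a_n<\infty$. Let $\tau_T$ be the Tychonoff topology on $\ell_\infty(X)$ and $\tau_{d_{p,(a_n)}}$ the topology induced by the metric $d_{p,(a_n)}$. Then $\tau_T=\tau_{d_{p,(a_n)}}$ if and only if $(X,d)$ is bounded.
   Context: $\mathbb{N}^*=\{0,1,2,\dots\}$. For a metric space $(X,d)$, $\ell_\infty(X)$ denotes the set of all bounded sequences $(x_n)_{n\in\mathbb{N}^*}$ of elements of $X$. For a sequence $(a_n)$ of nonnegative reals, $p\in[1,\infty)$ and $x=(x_n),y=(y_n)\in\ell_\infty(X)$, $d_{p,(a_n)}(x,y):=\left(\sum_{n=0}^\infty a_n d^p(x_n,y_n)\right)^{1/p}$. The Tychonoff topology on $\ell_\infty(X)$ is the subspace topology induced from the product topology on $\prod_{n\in\mathbb{N}^*}X$, i.e. the topology of coordinatewise convergence. *)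

(* Defs.v *)
From Stdlib Require Import Reals Lra List.
Open Scope R_scope.

Record MetricSpace := {
  msC :> Type;
  dist : msC -> msC -> R;
  dist_nonneg : forall x y, 0 <= dist x y;
  dist_eq0 : forall x y, dist x y = 0 <-> x = y;
  dist_sym : forall x y, dist x y = dist y x;
  dist_tri : forall x y z, dist x z <= dist x y + dist y z
}.

Definition rpow (a b : R) : R :=
  if Rle_dec a 0 then 0 else Rpower a b.

Definition bounded_space (X : MetricSpace) : Prop :=
  exists M : R, forall x y : X, dist X x y <= M.

(* ell_infty(X): bounded sequences indexed by N* = {0,1,2,...} *)
Definition ell_inf (X : MetricSpace) (x : nat -> X) : Prop :=
  exists (z : X) (M : R), forall n, dist X (x n) z <= M.

Definition is_dpa (X : MetricSpace) (p : R) (a : nat -> R)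
  (x y : nat -> X) (r : R) : Prop :=
  exists S : R,
    infinite_sum (fun n => a n * rpow (dist X (x n) (y n)) p) S /\
    r = rpow S (1 / p).

Definition open_X (X : MetricSpace) (V : X -> Prop) : Prop :=
  forall x, V x -> exists eps, 0 < eps /\ forall y, dist X x y < eps -> V y.

Definition product_open (X : MetricSpace) (W : (nat -> X) -> Prop) : Prop :=
  forall x, W x ->
    exists (F : list nat) (V : nat -> X -> Prop),
      (forall n, In n F -> open_X X (V n) /\ V n (x n)) /\
      (forall y, (forall n, In n F -> V n (y n)) -> W y).

(* Tychonoff topology on ell_infty(X): subspace topology.
   A subset of ell_infty(X) is represented by a predicate U on nat -> X,
   of which only the values on ell_infty(X) matter. *)
Definition tychonoff_open (X : MetricSpace) (U : (nat -> X) -> Prop) : Prop :=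
  exists W, product_open X W /\
    forall x, ell_inf X x -> (U x <-> W x).

Definition dpa_open (X : MetricSpace) (p : R) (a : nat -> R)
  (U : (nat -> X) -> Prop) : Prop :=
  forall x, ell_inf X x -> U x ->
    exists eps, 0 < eps /\
      forall y r, ell_inf X y -> is_dpa X p a x y r -> r < eps -> U y.

(* Main.v *)
Require Import Defs.
From Stdlib Require Import Reals Lra Lia List Classical.
Open Scope R_scope.

Lemma rpow_nonneg a b : 0 <= rpow a b.
Proof. unfold rpow; destruct (Rle_dec a 0); [lra|]. unfold Rpower; left; apply exp_pos. Qed.

Lemma rpow_pos_eq a b : 0 < a -> rpow a b = Rpower a b.
Proof. intro; unfold rpow; destruct (Rle_dec a 0); [lra|auto]. Qed.

Lemma Rpower_pos a b : 0 < Rpower a b.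
Proof. unfold Rpower; apply exp_pos. Qed.

Lemma rpow_pos a b : 0 < a -> 0 < rpow a b.
Proof. intro; rewrite rpow_pos_eq; auto; apply Rpower_pos. Qed.

Lemma rpow_mono u v b : 0 < b -> u <= v -> rpow u b <= rpow v b.
Proof.
  intros Hb Huv. destruct (Rle_dec u 0).
  - unfold rpow at 1; destruct (Rle_dec u 0); [|lra]. apply rpow_nonneg.
  - rewrite !rpow_pos_eq by lra. apply Rle_Rpower_l; lra.
Qed.

Lemma rpow_inv p x : 0 < p -> 0 < x -> rpow (rpow x (1/p)) p = x.
Proof.
  intros Hp Hx. rewrite (rpow_pos_eq x) by auto. rewrite rpow_pos_eq by apply Rpower_pos.
  rewrite Rpower_mult. replace (1/p*p) with 1 by (field; lra). apply Rpower_1; auto.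
Qed.

Lemma rpow_inv2 p x : 0 < p -> 0 < x -> rpow (rpow x p) (1/p) = x.
Proof.
  intros Hp Hx. rewrite (rpow_pos_eq x) by auto. rewrite rpow_pos_eq by apply Rpower_pos.
  rewrite Rpower_mult. replace (p*(1/p)) with 1 by (field; lra). apply Rpower_1; auto.
Qed.

Lemma rpow_mult x y b : 0 < x -> 0 < y -> rpow (x*y) b = rpow x b * rpow y b.
Proof.
  intros. rewrite !rpow_pos_eq; auto; [|nra]. rewrite Rpower_mult_distr; auto.
Qed.

Lemma term_le_sum (b : nat -> R) S n :
  (forall k, 0 <= b k) -> infinite_sum b S -> b n <= S.
Proof.
  intros Hb HS. apply Rle_trans with (sum_f_R0 b n).
  - destruct n; simpl; [lra|]. pose proof (cond_pos_sum b n Hb). lra.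
  - apply sum_incr; auto.
Qed.

Lemma sum_le_bound (b : nat -> R) S B :
  infinite_sum b S -> (forall m, sum_f_R0 b m <= B) -> S <= B.
Proof.
  intros HS Hm. apply (Rle_cv_lim (Un := sum_f_R0 b) (Vn := fun _ => B)); auto.
  intros e He; exists 0%nat; intros; unfold Rdist; rewrite Rminus_diag, Rabs_R0; lra.
Qed.

Section KL.
Variable X : MetricSpace.
Variables (p : R) (a : nat -> R).
Hypothesis hp : 1 <= p.
Hypothesis ha : forall n, 0 < a n.

Definition tt n := rpow (/ a n) (1/p).

Lemma tt_pos n : 0 < tt n.
Proof. unfold tt; apply rpow_pos. apply Rinv_0_lt_compat; auto. Qed.

Lemma KL x y r mu : 0 < mu -> is_dpa X p a x y r -> r < mu ->
  forall n, Defs.dist X (x n) (y n) < mu * tt n.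
Proof.
  intros Hmu [S [HS Hr]] Hrm n.
  assert (Hb : forall k, 0 <= a k * rpow (Defs.dist X (x k) (y k)) p).
  { intro k; apply Rmult_le_pos; [left; auto| apply rpow_nonneg]. }
  assert (HSn := term_le_sum _ _ n Hb HS).
  assert (HS0 : 0 <= S) by (eapply Rle_trans; [apply (Hb n)|exact HSn]).
  assert (HSlt : S < rpow mu p).
  { apply Rnot_le_lt; intro Hc.
    assert (0 < rpow mu p) by (apply rpow_pos; auto).
    assert (rpow (rpow mu p) (1/p) <= r).
    { rewrite Hr. apply rpow_mono; auto. apply Rdiv_lt_0_compat; lra. }
    rewrite rpow_inv2 in H0; lra. }
  apply Rnot_le_lt; intro Hc.
  assert (Hmt : 0 < mu * tt n) by (apply Rmult_lt_0_compat; auto; apply tt_pos).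
  assert (H1 : rpow (mu * tt n) p <= rpow (Defs.dist X (x n) (y n)) p) by (apply rpow_mono; lra).
  rewrite rpow_mult in H1 by (auto; apply tt_pos).
  unfold tt in H1; rewrite rpow_inv in H1 by (try lra; apply Rinv_0_lt_compat; auto).
  assert (H2 : a n * (rpow mu p * / a n) <= a n * rpow (Defs.dist X (x n) (y n)) p).
  { apply Rmult_le_compat_l; [left; auto| auto]. }
  replace (a n * (rpow mu p * / a n)) with (rpow mu p) in H2 by (field; specialize (ha n); lra).
  lra.
Qed.
End KL.

Lemma list_min (P : nat -> R -> Prop) F :
  (forall n e e', 0 < e' -> e' <= e -> P n e -> P n e') ->
  (forall n, In n F -> exists e, 0 < e /\ P n e) ->
  exists e, 0 < e /\ forall n, In n F -> P n e.
Proof.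
  intros Hm. induction F as [|k F IH]; intros H.
  - exists 1; split; [lra| intros n []].
  - destruct IH as [e1 [He1 H1]]. { intros n Hn; apply H; right; auto. }
    destruct (H k (or_introl eq_refl)) as [e2 [He2 H2]].
    exists (Rmin e1 e2); split. { apply Rmin_pos; auto. }
    intros n [<-|Hn].
    + eapply Hm; [apply Rmin_pos; auto| apply Rmin_r| auto].
    + eapply Hm; [apply Rmin_pos; auto| apply Rmin_l| auto].
Qed.

Lemma tych_dpa X p a U : 1 <= p -> (forall n, 0 < a n) ->
  tychonoff_open X U -> dpa_open X p a U.
Proof.
  intros hp ha [W [HW HUW]] x Hx HUx.
  apply HUW in HUx; auto.
  destruct (HW x HUx) as [F [V [HV HWV]]].
  destruct (list_min (fun n e => forall w, Defs.dist X (x n) w < e * tt p a n -> V n w) F)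
    as [mu [Hmu HP]].
  - intros n e e' He' Hle HPe w Hw. apply HPe.
    assert (0 < tt p a n) by (apply tt_pos; auto; lra). nra.
  - intros n Hn. destruct (HV n Hn) as [Ho Hxn].
    destruct (Ho _ Hxn) as [eps [Heps Hb]].
    assert (0 < tt p a n) by (apply tt_pos; auto; lra).
    exists (eps / tt p a n); split. { apply Rdiv_lt_0_compat; auto. }
    intros w Hw. apply Hb. replace (eps / tt p a n * tt p a n) with eps in Hw by (field; lra). auto.
  - exists mu; split; auto. intros y r Hy Hd Hr.
    apply HUW; auto. apply HWV. intros n Hn. apply HP; auto.
    eapply KL; eauto.
Qed.

Lemma sum_lin (f g : nat -> R) c d m :
  sum_f_R0 (fun k => c * f k + d * g k) m = c * sum_f_R0 f m + d * sum_f_R0 g m.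
Proof. induction m; simpl; [ring| rewrite IHm; ring]. Qed.

Lemma sum_S (f : nat -> R) m : sum_f_R0 f (S m) = sum_f_R0 f m + f (S m).
Proof. reflexivity. Qed.

Lemma sum_split (a : nat -> R) N0 m :
  sum_f_R0 (fun k => if (k <=? N0)%nat then 0 else a k) m + sum_f_R0 a (Nat.min m N0)
  = sum_f_R0 a m.
Proof.
  induction m.
  - simpl. replace (Nat.min 0 N0) with 0%nat by lia. simpl. ring.
  - rewrite !sum_S. destruct (Nat.leb_spec (S m) N0).
    + replace (Nat.min (S m) N0) with (S m) by lia.
      replace (Nat.min m N0) with m in IHm by lia. rewrite sum_S. lra.
    + replace (Nat.min (S m) N0) with N0 by lia.
      replace (Nat.min m N0) with N0 in IHm by lia. lra.
Qed.

Lemma small_dist (X : MetricSpace) p a (hp : 1 <= p) (ha : forall n, 0 < a n) A (hA : infinite_sum a A)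
  M (HM : forall x y : X, Defs.dist X x y <= M) eps (Heps : 0 < eps) :
  exists rho N0, 0 < rho /\ forall x z r,
    (forall n, (n <= N0)%nat -> Defs.dist X (x n) (z n) < rho) ->
    is_dpa X p a x z r -> r < eps.
Proof.
  set (c := rpow eps p).
  assert (Hc : 0 < c) by (apply rpow_pos; auto).
  set (M' := Rmax M 1).
  assert (HM' : 0 < M') by (unfold M'; pose proof (Rmax_r M 1); lra).
  set (K := rpow M' p).
  assert (HK : 0 < K) by (apply rpow_pos; auto).
  set (eta := c / (2 * (K + 1))).
  assert (Heta : 0 < eta) by (apply Rdiv_lt_0_compat; lra).
  assert (HKeta : K * eta < c / 2).
  { unfold eta. apply Rmult_lt_reg_r with (2*(K+1)); [lra|].
    replace (K * (c / (2 * (K + 1))) * (2 * (K + 1))) with (K * c) by (field; lra).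
    replace (c/2 * (2 * (K+1))) with (c*K + c) by field. lra. }
  destruct (hA eta Heta) as [N0 HN0].
  assert (HtailN : A - sum_f_R0 a N0 < eta).
  { specialize (HN0 N0 (le_n _)). unfold Rdist in HN0.
    apply Rabs_def2 in HN0. lra. }
  assert (HA0 : 0 <= A).
  { apply Rle_trans with (a 0%nat). left; auto. apply term_le_sum; auto. intro; left; auto. }
  set (delta := c / (2 * (A + 1))).
  assert (Hdelta : 0 < delta) by (apply Rdiv_lt_0_compat; lra).
  assert (HdA : delta * A < c / 2).
  { unfold delta. apply Rmult_lt_reg_r with (2*(A+1)); [lra|].
    replace (c / (2 * (A + 1)) * A * (2 * (A + 1))) with (c * A) by (field; lra).
    replace (c/2 * (2 * (A+1))) with (c*A + c) by field. lra. }
  exists (rpow delta (1/p)), N0. split.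
  { apply rpow_pos; auto. }
  intros x z r Hxz [S [HS Hr]].
  set (h := fun k => if (k <=? N0)%nat then 0 else a k).
  assert (Hbt : forall k, a k * rpow (Defs.dist X (x k) (z k)) p <= delta * a k + K * h k).
  { intro k. unfold h. pose proof (ha k). destruct (Nat.leb_spec k N0).
    - assert (rpow (Defs.dist X (x k) (z k)) p <= delta).
      { rewrite <- (rpow_inv p delta) by lra. apply rpow_mono; [lra|]. left; auto. }
      nra.
    - assert (rpow (Defs.dist X (x k) (z k)) p <= K).
      { apply rpow_mono; [lra|]. unfold M'. eapply Rle_trans; [apply HM| apply Rmax_l]. }
      nra. }
  assert (HSle : S <= delta * A + K * eta).
  { apply sum_le_bound with (b := fun k => a k * rpow (Defs.dist X (x k) (z k)) p); auto.
    intro m. eapply Rle_trans. { apply sum_growing. exact Hbt. }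
    rewrite sum_lin.
    assert (sum_f_R0 a m <= A) by (apply sum_incr; auto; intro; left; auto).
    assert (sum_f_R0 h m <= eta).
    { pose proof (sum_split a N0 m) as Hs. fold h in Hs.
      destruct (Nat.leb_spec m N0).
      - replace (Nat.min m N0) with m in Hs by lia. lra.
      - replace (Nat.min m N0) with N0 in Hs by lia. lra. }
    nra. }
  assert (HSc : S < c) by lra.
  rewrite Hr. destruct (Rle_dec S 0).
  - unfold rpow. destruct (Rle_dec S 0); lra.
  - unfold c in HSc. rewrite <- (rpow_inv2 p eps) by lra.
    rewrite !rpow_pos_eq by (lra || apply rpow_pos; lra).
    apply Rlt_Rpower_l. apply Rdiv_lt_0_compat; lra.
    split; [lra|]. rewrite <- rpow_pos_eq by auto. auto.
Qed.

Lemma cv_ext (u v : nat -> R) l : (forall n, u n = v n) -> Un_cv u l -> Un_cv v l.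
Proof. intros He H e Hp. destruct (H e Hp) as [N HN]. exists N. intros n Hn. rewrite <- He. auto. Qed.

Lemma dpa_exists (X : MetricSpace) p a (hp : 1 <= p) (ha : forall n, 0 < a n) A (hA : infinite_sum a A)
  M (HM : forall x y : X, Defs.dist X x y <= M) x z : exists r, is_dpa X p a x z r.
Proof.
  set (K := rpow (Rmax M 1) p).
  destruct (Rseries_CV_comp (fun k => a k * rpow (Defs.dist X (x k) (z k)) p) (fun k => K * a k)) as [S HS].
  - intro k. pose proof (ha k). split.
    + apply Rmult_le_pos; [lra| apply rpow_nonneg].
    + assert (rpow (Defs.dist X (x k) (z k)) p <= K).
      { apply rpow_mono; [lra|]. eapply Rle_trans; [apply HM| apply Rmax_l]. }
      nra.
  - exists (K * A). apply cv_ext with (u := fun i => K * sum_f_R0 a i).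
    + intro n. induction n; simpl; [ring| rewrite <- IHn; ring].
    + apply (CV_mult (fun _ => K) (sum_f_R0 a)); auto.
      intros e He; exists 0%nat; intros; unfold Rdist; rewrite Rminus_diag, Rabs_R0; lra.
  - exists (rpow S (1/p)), S. split; auto.
Qed.

Lemma dpa_tych (X : MetricSpace) p a U (hp : 1 <= p) (ha : forall n, 0 < a n) A (hA : infinite_sum a A)
  (hb : bounded_space X) : dpa_open X p a U -> tychonoff_open X U.
Proof.
  destruct hb as [M HM]. intro HU.
  exists (fun y => exists x rho N0, ell_inf X x /\ U x /\ 0 < rho /\
     (forall z, ell_inf X z -> (forall n, (n <= N0)%nat -> Defs.dist X (x n) (z n) < rho) -> U z) /\
     (forall n, (n <= N0)%nat -> Defs.dist X (x n) (y n) < rho)).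
  split.
  - intros y [x [rho [N0 [Hx [HUx [Hrho [Hprop Hy]]]]]]].
    exists (seq 0 (S N0)), (fun n w => Defs.dist X (x n) w < rho). split.
    + intros n Hn. apply in_seq in Hn. split; [|apply Hy; lia].
      intros w Hw. exists (rho - Defs.dist X (x n) w); split; [lra|].
      intros v Hv. pose proof (Defs.dist_tri X (x n) w v). lra.
    + intros y' Hy'. exists x, rho, N0; repeat split; auto.
      intros n Hn; apply Hy'; apply in_seq; lia.
  - intros x Hx; split.
    + intro HUx. destruct (HU x Hx HUx) as [eps [Heps Hball]].
      destruct (small_dist X p a hp ha A hA M HM eps Heps) as [rho [N0 [Hrho Hsd]]].
      exists x, rho, N0; repeat split; auto.
      * intros z Hz Hc. destruct (dpa_exists X p a hp ha A hA M HM x z) as [r Hr].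
        apply (Hball z r); auto. eapply Hsd; eauto.
      * intros n _. replace (Defs.dist X (x n) (x n)) with 0 by (symmetry; apply Defs.dist_eq0; auto). auto.
    + intros [x' [rho [N0 [Hx' [HUx' [Hrho [Hprop Hy]]]]]]]. apply Hprop; auto.
Qed.

Lemma fold_max_ge F n : In n F -> (n <= fold_right Nat.max 0%nat F)%nat.
Proof. induction F; simpl; [tauto|]. intros [->|H]; [lia| specialize (IHF H); lia]. Qed.

Theorem mainTheorem4 (X : MetricSpace)
  (hX : exists x y : X, x <> y)
  (p : R) (hp : 1 <= p)
  (a : nat -> R) (ha : forall n, 0 < a n)
  (hsum : exists S, infinite_sum a S) :
  (forall U : (nat -> X) -> Prop, tychonoff_open X U <-> dpa_open X p a U)
  <-> bounded_space X.
Proof.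
  split.
  2:{ intros hb U. destruct hsum as [A hA]. split.
      - apply tych_dpa; auto.
      - eapply dpa_tych; eauto. }
  intros H. apply NNPP; intro Hnb. destruct hX as [z [_ _]].
  set (U := fun y : nat -> X => exists lam, lam < 1 /\ forall n, Defs.dist X z (y n) <= lam * tt p a n).
  assert (HdU : dpa_open X p a U).
  { intros x Hx [lam [Hl Hb]]. exists ((1-lam)/2). split; [lra|].
    intros y r Hy Hd Hr. exists (lam + (1-lam)/2); split; [lra|]. intro n.
    pose proof (KL X p a hp ha x y r ((1-lam)/2) ltac:(lra) Hd Hr n).
    pose proof (Defs.dist_tri X z (x n) (y n)). specialize (Hb n).
    rewrite Rmult_plus_distr_r. lra. }
  apply H in HdU. destruct HdU as [W [HW HUW]].
  set (x0 := fun _ : nat => z).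
  assert (Hz0 : Defs.dist X z z = 0) by (apply Defs.dist_eq0; auto).
  assert (Hx0 : ell_inf X x0) by (exists z, 0; intro; unfold x0; lra).
  assert (HUx0 : U x0).
  { exists 0; split; [lra|]. intro n; unfold x0; rewrite Hz0. pose proof (tt_pos p a ha n); nra. }
  apply HUW in HUx0; auto.
  destruct (HW x0 HUx0) as [F [V [HV HWV]]].
  set (N := S (fold_right Nat.max 0%nat F)).
  set (T := tt p a N).
  assert (HT : 0 < T) by (apply tt_pos; auto; lra).
  assert (Hw : exists w, T < Defs.dist X z w).
  { apply NNPP; intro Hc. apply Hnb. exists (2*T). intros u v.
    pose proof (Defs.dist_tri X u z v). pose proof (Defs.dist_sym X u z).
    destruct (Rle_dec (Defs.dist X z u) T); [|exfalso; apply Hc; exists u; lra].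
    destruct (Rle_dec (Defs.dist X z v) T); [|exfalso; apply Hc; exists v; lra].
    lra. }
  destruct Hw as [w Hw].
  set (y := fun n => if Nat.eq_dec n N then w else z).
  assert (HWy : W y).
  { apply HWV. intros n Hn. unfold y. destruct (Nat.eq_dec n N).
    - exfalso. apply fold_max_ge in Hn. unfold N in e. lia.
    - apply (HV n Hn). }
  assert (Hy : ell_inf X y).
  { exists z, (Defs.dist X w z). intro n. unfold y. destruct (Nat.eq_dec n N); [lra|].
    rewrite Hz0. apply Defs.dist_nonneg. }
  apply HUW in HWy; auto.
  destruct HWy as [lam [Hl Hb]]. specialize (Hb N). unfold y in Hb.
  destruct (Nat.eq_dec N N); [|congruence]. fold T in Hb. nra.
Qed.
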